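(* Let $W$ be the group of a reflection lattice, with a chosen set $\{r_i\}_{i\in I}$ of simple reflections. Let $\mathbf{i}=i_1i_2\cdots i_m$ be a minimal word, $\sigma\in W$ a reflection, and $n$ the number of times $\sigma$ appears in the sequence of reflections associated to $\mathbf{i}$. Suppose that $\sigma$ is a simple reflection, that $r(\mathbf{i})$ is a reflection which commutes with $\sigma$, and that $r(\mathbf{i})\neq\sigma$. Then $n=0$.
   Context: A reflection lattice is a free abelian group $L$ of finite rank with a finite subgroup $W\subset\mathrm{Aut}(L)$ generated by the reflections (automorphisms conjugate in $GL(r,\mathbb{Q})$ to $\mathrm{diag}(-1,1,\dots,1)$) it contains; $W$ is a finite Weyl group and a set of simple reflections $\{r_i\}_{i\in I}$ is a Coxeter generating set of reflections in the walls of a chamber. Let $\mathbf{I}$ be the free group on $I$ and $r:\mathbf{I}\to W$ the homomorphism with $r(i)=r_i$. A word is positive if it is a product of elements of $I$; its length is the number of factors. A positive word $\mathbf{i}$ is minimal if no positive word of smaller length has the same image under $r$. For a positive word $\mathbf{i}=i_1\cdots i_m$, the associated sequence of reflections is $\sigma_1,\dots,\sigma_m$ with $\sigma_k=r(i_1\cdots i_{k-1})\,r_{i_k}\,r(i_1\cdots i_{k-1})^{-1}$. *)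

(* Defs.v *)
From mathcomp Require Import all_boot all_order all_algebra.
Set Implicit Arguments. Unset Strict Implicit. Unset Printing Implicit Defensive.
Import Order.TTheory GRing.Theory Num.Theory.
Local Open Scope ring_scope.

(* The lattice L is Z^n (column vectors); Aut(L) = GL(n,Z) = invertible
   integer n x n matrices acting by left multiplication.
   L (x) Q = 'cV[rat]_n. *)

Definition ratmx (n : nat) (A : 'M[int]_n) : 'M[rat]_n := map_mx intr A.

Definition diag_refl (n : nat) : 'M[rat]_n :=
  diag_mx (\row_(i < n) (if nat_of_ord i == 0%N then -1 else 1)).

Definition is_reflection (n : nat) (s : 'M[int]_n) : Prop :=
  exists P : 'M[rat]_n, P \in unitmx /\ ratmx s = invmx P *m diag_refl n *m P.

Definition reflection_lattice_group (n : nat) (W : seq 'M[int]_n) : Prop :=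
  [/\ 1%:M \in W,
      (forall A B, A \in W -> B \in W -> A *m B \in W),
      (forall A, A \in W -> A \in unitmx /\ invmx A \in W) &
      (forall A, A \in W -> exists rs : seq 'M[int]_n,
          (forall s, s \in rs -> s \in W /\ is_reflection s) /\
          A = foldr mulmx 1%:M rs)].

Definition fixes (n : nat) (s : 'M[int]_n) (x : 'cV[rat]_n) : Prop :=
  ratmx s *m x = x.

(* v lies in a chamber: it is on no reflecting hyperplane of W *)
Definition generic (n : nat) (W : seq 'M[int]_n) (v : 'cV[rat]_n) : Prop :=
  forall t, t \in W -> is_reflection t -> ~ fixes t v.

(* The reflecting hyperplane of s is a wall of the chamber containing v:
   there is a point x of H_s lying on no other reflecting hyperplane and such
   that the half-open segment [v, x) meets no reflecting hyperplane
   (i.e. x is in the relative interior of a facet of the closed chamber). *)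
Definition wall (n : nat) (W : seq 'M[int]_n) (v : 'cV[rat]_n)
  (s : 'M[int]_n) : Prop :=
  exists x : 'cV[rat]_n,
    [/\ fixes s x,
        (forall t, t \in W -> is_reflection t -> fixes t x ->
           forall y, fixes t y <-> fixes s y) &
        (forall lam : rat, 0 <= lam -> lam < 1 ->
           forall t, t \in W -> is_reflection t ->
             ~ fixes t (v + lam *: (x - v)))].

(* {r_i}_{i in I} is the (injectively indexed) set of simple reflections:
   the reflections of W in the walls of some chamber. *)
Definition simple_reflections (n : nat) (W : seq 'M[int]_n) (I : finType)
  (r : I -> 'M[int]_n) : Prop :=
  injective r /\
  exists v : 'cV[rat]_n, generic W v /\
    forall s, (s \in W /\ is_reflection s /\ wall W v s) <-> exists i, s = r i.

Definition rword (n : nat) (I : Type) (r : I -> 'M[int]_n) (w : seq I)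
  : 'M[int]_n := foldr (fun i A => r i *m A) 1%:M w.

Definition minimal_word (n : nat) (I : Type) (r : I -> 'M[int]_n) (w : seq I)
  : Prop :=
  forall w' : seq I, (size w' < size w)%N -> rword r w' <> rword r w.

(* sequence of reflections sigma_k = P_k r_{i_k} P_k^{-1},
   P_k = r(i_1 ... i_{k-1}); P is the accumulated prefix product. *)
Fixpoint refl_seq_aux (n : nat) (I : Type) (r : I -> 'M[int]_n)
  (P : 'M[int]_n) (w : seq I) : seq 'M[int]_n :=
  match w with
  | [::] => [::]
  | i :: w' => (P *m r i *m invmx P) :: refl_seq_aux r (P *m r i) w'
  end.

Definition refl_seq (n : nat) (I : Type) (r : I -> 'M[int]_n) (w : seq I)
  : seq 'M[int]_n := refl_seq_aux r 1%:M w.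

(* Main.v *)
Require Import Defs.
From mathcomp Require Import all_boot all_order all_algebra.
From mathcomp Require Import ring lra.
Set Implicit Arguments. Unset Strict Implicit. Unset Printing Implicit Defensive.
Import Order.TTheory GRing.Theory Num.Theory.
Local Open Scope ring_scope.

Definition ev n (b : 'rV[rat]_n) (y : 'cV[rat]_n) : rat := (b *m y) 0 0.
Definition reflab n (T : 'M[rat]_n) (a : 'cV[rat]_n) (b : 'rV[rat]_n) :=
  (forall y, T *m y = y - (2 * ev b y) *: a) /\ ev b a = 1.

Lemma evD n (b : 'rV[rat]_n) y z : ev b (y + z) = ev b y + ev b z.
Proof. by rewrite /ev mulmxDr mxE. Qed.
Lemma evZ n (b : 'rV[rat]_n) c y : ev b (c *: y) = c * ev b y.
Proof. by rewrite /ev -scalemxAr mxE. Qed.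
Lemma evN n (b : 'rV[rat]_n) y : ev b (- y) = - ev b y.
Proof. by rewrite /ev mulmxN mxE. Qed.
Lemma evB n (b : 'rV[rat]_n) y z : ev b (y - z) = ev b y - ev b z.
Proof. by rewrite evD evN. Qed.
Lemma ev0 n (b : 'rV[rat]_n) : ev b 0 = 0.
Proof. by rewrite /ev mulmx0 mxE. Qed.

Lemma mul_ev n (a : 'cV[rat]_n) (b : 'rV[rat]_n) y : a *m (b *m y) = ev b y *: a.
Proof. by rewrite {1}[b *m y]mx11_scalar mul_mx_scalar. Qed.

Lemma diag_reflE n (i0 : 'I_n) : nat_of_ord i0 = 0%N ->
  diag_refl n = 1%:M - 2 *: (delta_mx i0 (0 : 'I_1) *m delta_mx 0 i0).
Proof.
move=> Hi0; rewrite mul_delta_mx; apply/matrixP => i j.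
rewrite !mxE.
have Hi : (i == i0) = (nat_of_ord i == 0%N) by rewrite -val_eqE /= Hi0.
have Hj : (j == i0) = (nat_of_ord j == 0%N) by rewrite -val_eqE /= Hi0.
rewrite Hi Hj.
case: (eqVneq i j) => [<-|Hij] /=.
  by case: (nat_of_ord i == 0%N) => /=; rewrite ?mulr1n; ring.
rewrite mulr0n.
case: (nat_of_ord i =P 0%N) => Hi0'; case: (nat_of_ord j =P 0%N) => Hj0 /=; try ring.
by case/eqP: Hij; apply: val_inj; rewrite /= Hi0' Hj0.
Qed.

Lemma refl_ab n (s : 'M[int]_n) : (0 < n)%N -> is_reflection s ->
  exists a b, reflab (ratmx s) a b.
Proof.
move=> Hn [P [Pu E]].
set i0 := Ordinal Hn.
exists (invmx P *m delta_mx i0 0), (delta_mx 0 i0 *m P); split.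
  move=> y; rewrite E (diag_reflE (i0 := i0)) //.
  rewrite mulmxBr mulmx1 mulmxBl mulVmx // mulmxBl mul1mx.
  congr (_ - _).
  rewrite -!mulmxA -scalemxAl -scalemxAr -!mulmxA mul_ev -scalemxAr scalerA.
  by rewrite /ev !mulmxA.
rewrite /ev !mulmxA -[delta_mx 0 i0 *m P *m invmx P]mulmxA mulmxV // mulmx1.
by rewrite mul_delta_mx mxE.
Qed.


Lemma mx_ext n (A B : 'M[rat]_n) : (forall y : 'cV_n, A *m y = B *m y) -> A = B.
Proof.
move=> H; apply/matrixP => i j.
have := congr1 (fun M : 'cV_n => M i 0) (H (delta_mx j 0)).
by rewrite -!colE !mxE.
Qed.

Lemma decomp n (a : 'cV[rat]_n) b y : ev b a = 1 ->
  y = (y - ev b y *: a) + ev b y *: a /\ ev b (y - ev b y *: a) = 0.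
Proof.
move=> Ha; split; first by rewrite subrK.
by rewrite evB evZ Ha mulr1 subrr.
Qed.

Lemma fixE n (S : 'M[rat]_n) a b (y : 'cV[rat]_n) : reflab S a b -> (S *m y = y <-> ev b y = 0).
Proof.
move=> [HS Ha]; rewrite HS; split.
  move/(congr1 (ev b)); rewrite evB evZ Ha; lra.
by move=> ->; rewrite mulr0 scale0r subr0.
Qed.

Lemma refl_a n (S : 'M[rat]_n) a b : reflab S a b -> S *m a = - a.
Proof. move=> [HS Ha]; rewrite HS Ha mulr1 scaler_nat; rewrite mulr2n opprD addrA subrr sub0r //. Qed.

Lemma refl_ev n (S : 'M[rat]_n) a b (y : 'cV[rat]_n) : reflab S a b -> ev b (S *m y) = - ev b y.
Proof. move=> [HS Ha]; rewrite HS evB evZ Ha; ring. Qed.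

Lemma refl_inv n (S : 'M[rat]_n) a b (y : 'cV[rat]_n) : reflab S a b -> S *m (S *m y) = y.
Proof.
move=> HS'; have [HS Ha] := HS'; rewrite [S *m (S *m y)]HS (refl_ev _ HS') [S *m y]HS.
by rewrite mulrN scaleNr opprK subrK.
Qed.

Lemma phi_form n (S T : 'M[rat]_n) a b a' b' : reflab S a b -> reflab T a' b' ->
  (forall y : 'cV_n, S *m y = y -> T *m y = y) ->
  exists c, (forall y, T *m y = y - (2 * ev b y) *: c) /\ ev b c = 1.
Proof.
move=> HS HT Hfix.
have Hev : forall y, ev b' y = ev b y * ev b' a.
  move=> y; have [Hy Hh] := decomp y HS.2.
  have : T *m (y - ev b y *: a) = (y - ev b y *: a).
    by apply: Hfix; apply/(fixE _ HS).
  move/(fixE _ HT) => Hh'.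
  by rewrite {1}Hy evD Hh' evZ add0r.
exists (ev b' a *: a'); split.
  by move=> y; rewrite HT.1 Hev scalerA mulrA.
have := HT.2; rewrite Hev evZ => H; rewrite mulrC //.
Qed.


Lemma lin_decomp n (T : 'M[rat]_n) a b (y : 'cV[rat]_n) : ev b a = 1 ->
  T *m y = T *m (y - ev b y *: a) + ev b y *: (T *m a).
Proof.
move=> Ha; by rewrite scalemxAr -mulmxDr subrK.
Qed.

Lemma commute_ev n (S T : 'M[rat]_n) a b a' b' : reflab S a b -> reflab T a' b' ->
  T *m S = S *m T -> T <> S -> forall y, ev b (T *m y) = ev b y.
Proof.
move=> HS HT HTS HneqTS.
have Sa := refl_a HS.
set mu := ev b (T *m a).
have Ta : T *m a = mu *: a.
  have H1 : S *m (T *m a) = - (T *m a) by rewrite mulmxA -HTS -mulmxA Sa mulmxN.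
  rewrite HS.1 -/mu in H1.
  have E : T *m a + T *m a = (2 * mu) *: a.
    apply/eqP; rewrite -subr_eq0; apply/eqP.
    by rewrite -addrA H1 addrN.
  apply: (scalerI (a := 2)); first by [].
  by rewrite scalerA scaler_nat mulr2n.
have Hh : forall h, ev b h = 0 -> ev b (T *m h) = 0.
  move=> h /(fixE _ HS) Sh; apply/(fixE _ HS).
  by rewrite mulmxA -HTS -mulmxA Sh.
have Hlin : forall y, ev b (T *m y) = mu * ev b y.
  move=> y; rewrite (lin_decomp T y HS.2) evD evZ Hh ?(decomp y HS.2).2 // Ta evZ HS.2.
  ring.
have Hmu : mu * mu = 1.
  have := refl_inv a HT; move/(congr1 (ev b)); rewrite Hlin -/mu HS.2 => <-.
  by [].
have [Hm1|Hm1] : mu = 1 \/ mu = -1.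
  have : (mu - 1) * (mu + 1) = 0 by rewrite mulrDr !mulrBl Hmu; ring.
  move/eqP; rewrite mulf_eq0 => /orP [/eqP H|/eqP H]; [left|right]; lra.
  by move=> y; rewrite Hlin Hm1 mul1r.
exfalso; apply: HneqTS.
have Ta' : T *m a = - a by rewrite Ta Hm1 scaleN1r.
have Hk : ev b' a * ev b a' = 1.
  have := Ta'; rewrite HT.1 => /(congr1 (ev b)); rewrite evB evZ evN HS.2; lra.
have Th : forall h, ev b h = 0 -> T *m h = h.
  move=> h H0; apply/(fixE _ HT).
  have := Hh h H0; rewrite HT.1 evB evZ H0.
  move=> E.
  have : ev b' h * (ev b' a * ev b a') = 0.
    have E2 : ev b' h * ev b a' = 0 by lra.
    by rewrite mulrCA E2 mulr0.
  by rewrite Hk mulr1.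
apply: mx_ext => y.
rewrite (lin_decomp T y HS.2) (lin_decomp S y HS.2) Ta' Sa.
by rewrite Th ?(decomp y HS.2).2 // (proj2 (fixE _ HS)) ?(decomp y HS.2).2.
Qed.


Lemma ratmxM n (A B : 'M[int]_n) : ratmx (A *m B) = ratmx A *m ratmx B.
Proof. exact: map_mxM. Qed.
Lemma ratmx1 n : ratmx (1%:M : 'M[int]_n) = 1%:M.
Proof. exact: map_mx1. Qed.
Lemma ratmx_inj n : injective (@ratmx n).
Proof.
move=> A B H; apply/matrixP => i j.
by have := congr1 (fun M : 'M[rat]_n => M i j) H; rewrite !mxE => /intr_inj.
Qed.

Lemma pigeon (T : eqType) (W : seq T) (f : nat -> T) : (forall k, f k \in W) ->
  exists i j, (i < j)%N /\ f i = f j.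
Proof.
move=> Hf; set sq := map f (iota 0 (size W).+1).
have : ~~ uniq sq.
  apply/negP => Hu.
  have Hsub : {subset sq <= W} by move=> x /mapP [k _ ->].
  by have := uniq_leq_size Hu Hsub; rewrite size_map size_iota ltnn.
case/(uniqPn (f 0%N)) => i [j [Hij Hj]].
rewrite size_map size_iota in Hj.
rewrite !(nth_map 0%N) ?size_iota ?(ltn_trans Hij) // !nth_iota ?(ltn_trans Hij) //.
by rewrite !add0n => E; exists i, j.
Qed.

Lemma conj_refl n (t A B : 'M[int]_n) : is_reflection t -> B *m A = 1%:M ->
  is_reflection (B *m t *m A).
Proof.
move=> [P [Pu E]] HBA.
have HBA' : ratmx B *m ratmx A = 1%:M by rewrite -ratmxM HBA ratmx1.
have HAB' := mulmx1C HBA'.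
have Hinv : (ratmx B *m invmx P) *m (P *m ratmx A) = 1%:M.
  by rewrite mulmxA -[ratmx B *m invmx P *m P]mulmxA mulVmx // mulmx1.
have [_ Hu] := mulmx1_unit Hinv.
exists (P *m ratmx A); split => //.
have -> : invmx (P *m ratmx A) = ratmx B *m invmx P.
  by rewrite -[LHS]mul1mx -Hinv mulmxK.
by rewrite !ratmxM E !mulmxA.
Qed.


Lemma same_fix n (W : seq 'M[int]_n) (s tau : 'M[int]_n) a b c :
  (forall A B, A \in W -> B \in W -> A *m B \in W) -> 1%:M \in W ->
  s \in W -> tau \in W -> reflab (ratmx s) a b ->
  (forall y, ratmx tau *m y = y - (2 * ev b y) *: c) -> ev b c = 1 -> tau = s.
Proof.
move=> Hmul H1 Hs Ht HS HT Hc.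
set u := tau *m s. set h := c - a.
have Hu : forall y, ratmx u *m y = y + (2 * ev b y) *: h.
  move=> y; rewrite ratmxM -mulmxA HT (refl_ev _ HS) HS.1 /h scalerBr.
  by rewrite mulrN scaleNr opprK addrA addrAC.
have Hev_h : ev b h = 0 by rewrite evB Hc HS.2 subrr.
pose pw k := iter k (mulmx u) 1%:M.
have Hpw : forall k (y : 'cV[rat]_n), ratmx (pw k) *m y = y + (2 * k%:R * ev b y) *: h.
  elim => [|k IH] y; first by rewrite /= ratmx1 mul1mx mulr0 mul0r scale0r addr0.
  rewrite /pw iterS -/(pw k) ratmxM -mulmxA IH mulmxDr -scalemxAr !Hu Hev_h.
  rewrite mulr0 scale0r addr0 -addrA -scalerDl; congr (_ + (_ *: _)).
  rewrite -addn1 natrD; ring.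
have Hpwin : forall k, pw k \in W.
  elim => [|k IH]; first exact: H1.
  rewrite /pw iterS -/(pw k). apply: (Hmul) => //. exact: (Hmul).
have [i [j [Hij E]]] := pigeon Hpwin.
have : ratmx (pw i) *m a = ratmx (pw j) *m a by rewrite E.
rewrite !Hpw HS.2 => /addrI /eqP; rewrite -subr_eq0 -scalerBl scaler_eq0.
case/orP => [/eqP H|/eqP Hh0].
  have : (i%:R < j%:R :> rat) by rewrite ltr_nat.
  move=> Hlt; exfalso; lra.
have Hca : c = a by apply/eqP; rewrite -subr_eq0 -/h Hh0.
apply: ratmx_inj; apply: mx_ext => y; by rewrite HT HS.1 Hca.
Qed.


Lemma root_seg (c0 c1 : rat) : 0 < c0 -> c1 < 0 ->
  exists l : rat, [/\ 0 <= l, l < 1 & c0 + l * (c1 - c0) = 0].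
Proof.
move=> H0 H1; have Hd : 0 < c0 - c1 by lra.
exists (c0 / (c0 - c1)); split.
- by apply: divr_ge0; lra.
- by rewrite ltr_pdivrMr // mul1r; lra.
- have Hd' : c0 - c1 != 0 by rewrite gt_eqF.
  field; exact: Hd'.
Qed.

Lemma sign_seg (c0 c1 : rat) :
  (forall l : rat, 0 <= l -> l < 1 -> c0 + l * (c1 - c0) != 0) -> c1 != 0 ->
  0 < c0 * c1.
Proof.
move=> H Hc1.
have Hc0 : c0 != 0 by have := H 0 (lexx _) ltr01; rewrite mul0r addr0.
case: (ltrP 0 (c0 * c1)) => // Hle; exfalso.
have [c0n|c0p] : c0 < 0 \/ 0 < c0 by move: Hc0; rewrite neq_lt => /orP.
- have [c1n|c1p] : c1 < 0 \/ 0 < c1 by move: Hc1; rewrite neq_lt => /orP.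
  + nra.
  + have [l [Hl0 Hl1 E]] := root_seg (c0 := - c0) (c1 := - c1) ltac:(lra) ltac:(lra).
    have E' : c0 + l * (c1 - c0) = - (- c0 + l * (- c1 - - c0)) by ring.
    by move: (H l Hl0 Hl1); rewrite E' E oppr0 eqxx.
- have [c1n|c1p] : c1 < 0 \/ 0 < c1 by move: Hc1; rewrite neq_lt => /orP.
  + have [l [Hl0 Hl1 E]] := root_seg c0p c1n.
    by move: (H l Hl0 Hl1); rewrite E eqxx.
  + nra.
Qed.


Lemma refl_invol n (t : 'M[int]_n) : (0 < n)%N -> is_reflection t -> t *m t = 1%:M.
Proof.
move=> Hn Ht; have [a [b H]] := refl_ab Hn Ht.
apply: ratmx_inj; rewrite ratmxM ratmx1; apply: mx_ext => y.
by rewrite -mulmxA (refl_inv _ H) mul1mx.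
Qed.

Lemma ev_seg n (b : 'rV[rat]_n) (M : 'M[rat]_n) p q (l : rat) :
  ev b (M *m (p + l *: (q - p))) = ev b (M *m p) + l * (ev b (M *m q) - ev b (M *m p)).
Proof. by rewrite mulmxDr -scalemxAr mulmxBr evD evZ evB. Qed.

Lemma nofix n (W : seq 'M[int]_n) (s G : 'M[int]_n) a b (y : 'cV[rat]_n) :
  (forall A B, A \in W -> B \in W -> A *m B \in W) ->
  (forall A, A \in W -> A \in unitmx /\ invmx A \in W) ->
  s \in W -> is_reflection s -> reflab (ratmx s) a b -> G \in W ->
  (forall t, t \in W -> is_reflection t -> ~ fixes t y) ->
  ev b (ratmx G *m y) != 0.
Proof.
move=> Hmul Hinv Hs Hsr HS HG Hy; apply/negP => /eqP /(fixE _ HS) Hfix.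
have [Gu GiW] := Hinv G HG.
apply: (Hy (invmx G *m s *m G)).
- by apply: (Hmul) => //; apply: (Hmul).
- by apply: conj_refl => //; rewrite mulVmx.
- rewrite /fixes !ratmxM -!mulmxA Hfix mulmxA -ratmxM mulVmx // ratmx1 mul1mx //.
Qed.


Lemma step_else n (W : seq 'M[int]_n) (s G ri : 'M[int]_n) a b (v : 'cV[rat]_n) :
  (0 < n)%N ->
  (forall A B, A \in W -> B \in W -> A *m B \in W) ->
  (forall A, A \in W -> A \in unitmx /\ invmx A \in W) -> 1%:M \in W ->
  s \in W -> is_reflection s -> reflab (ratmx s) a b -> G \in W ->
  ri \in W -> is_reflection ri -> wall W v ri ->
  G *m ri *m invmx G <> s ->
  0 < ev b (ratmx G *m v) * ev b (ratmx (G *m ri) *m v).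
Proof.
move=> Hn Hmul Hinv H1 Hs Hsr HS HG HriW Hrir [x [Hx Huniq Hseg]] Hneq.
have [Gu GiW] := Hinv G HG.
have RGGi : ratmx G *m ratmx (invmx G) = 1%:M by rewrite -ratmxM mulmxV // ratmx1.
have Hfx : ev b (ratmx G *m x) != 0.
  apply/negP => /eqP /(fixE _ HS) Hfix.
  set t := invmx G *m s *m G.
  have tW : t \in W by apply: (Hmul) => //; apply: (Hmul).
  have tr : is_reflection t by apply: conj_refl => //; rewrite mulVmx.
  have Htx : fixes t x.
    rewrite /fixes /t !ratmxM -!mulmxA Hfix mulmxA -ratmxM mulVmx // ratmx1 mul1mx //.
  have Hu := Huniq t tW tr Htx.
  set sg := G *m ri *m invmx G.
  have sgW : sg \in W by apply: (Hmul) => //; apply: (Hmul).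
  have sgr : is_reflection sg by apply: conj_refl => //; rewrite mulmxV.
  have [a' [b' Hsg]] := refl_ab Hn sgr.
  have Hphi : forall y : 'cV[rat]_n, ratmx s *m y = y -> ratmx sg *m y = y.
    move=> y Hy.
    have : fixes t (ratmx (invmx G) *m y).
      by rewrite /fixes /t !ratmxM -!mulmxA (mulmxA (ratmx G)) RGGi mul1mx Hy.
    move/(Hu _) => Hr.
    by rewrite /sg !ratmxM -!mulmxA Hr mulmxA RGGi mul1mx.
  have [c [Hc1 Hc2]] := phi_form HS Hsg Hphi.
  by apply: Hneq; exact: (same_fix Hmul H1 Hs sgW HS Hc1 Hc2).
have S1 : 0 < ev b (ratmx G *m v) * ev b (ratmx G *m x).
  apply: sign_seg Hfx => l Hl0 Hl1; rewrite -ev_seg.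
  exact: (nofix Hmul Hinv Hs Hsr HS HG (Hseg l Hl0 Hl1)).
have G'W : G *m ri \in W by apply: (Hmul).
have S2 : 0 < ev b (ratmx G *m (ratmx ri *m v)) * ev b (ratmx G *m x).
  apply: sign_seg Hfx => l Hl0 Hl1; rewrite -ev_seg.
  have := nofix Hmul Hinv Hs Hsr HS G'W (Hseg l Hl0 Hl1).
  rewrite ratmxM -mulmxA mulmxDr -scalemxAr mulmxBr.
  by rewrite /fixes in Hx; rewrite Hx.
rewrite ratmxM -mulmxA; nra.
Qed.


Lemma sq_pos (x : rat) : x != 0 -> 0 < x * x.
Proof. by rewrite neq_lt => /orP [] H; nra. Qed.

Lemma pos_trans (A B C : rat) : 0 < A * B -> 0 < B * C -> 0 < A * C.
Proof.
move=> H1 H2.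
have HB : B != 0 by apply/eqP => HB; move: H1; rewrite HB mulr0 ltxx.
have := mulr_gt0 H1 H2.
have -> : A * B * (B * C) = (A * C) * (B * B) by ring.
by rewrite pmulr_lgt0 // sq_pos.
Qed.

Lemma ind n (W : seq 'M[int]_n) (I : Type) (r : I -> 'M[int]_n) s a b v :
  (0 < n)%N ->
  (forall A B, A \in W -> B \in W -> A *m B \in W) ->
  (forall A, A \in W -> A \in unitmx /\ invmx A \in W) -> 1%:M \in W ->
  s \in W -> is_reflection s -> reflab (ratmx s) a b ->
  generic W v ->
  (forall i, [/\ r i \in W, is_reflection (r i) & wall W v (r i)]) ->
  forall w G, G \in W ->
  0 < ev b (ratmx G *m v) * ev b (ratmx (G *m rword r w) *m v)
      * (-1) ^+ count_mem s (refl_seq_aux r G w).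
Proof.
move=> Hn Hmul Hinv H1 Hs Hsr HS Hgen Hr.
elim => [|i w IH] G HG.
  rewrite /rword /= mulmx1 expr0 mulr1; apply: sq_pos.
  exact: (nofix Hmul Hinv Hs Hsr HS HG Hgen).
have [riW rir riwall] := Hr i.
have HG' : G *m r i \in W by apply: (Hmul).
have [Gu GiW] := Hinv G HG.
have := IH _ HG'.
change (rword r (i :: w)) with (r i *m rword r w).
rewrite /= mulmxA exprD.
case: eqP => [Esg|Nsg] /= IH'.
  have Hsg : ratmx (G *m r i) = ratmx s *m ratmx G.
    by rewrite -Esg -ratmxM mulmxKV.
  move: IH'; rewrite [X in ev b (X *m v)]Hsg -mulmxA (refl_ev _ HS).
  set A := ev b (ratmx G *m v); set F := ev b _; set e := (-1) ^+ _.
  move=> IH'.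
  have -> : A * F * ((-1) ^+ 1%N * e) = - A * F * e by rewrite expr1; ring.
  exact: IH'.
have Hst := step_else Hn Hmul Hinv H1 Hs Hsr HS HG riW rir riwall Nsg.
rewrite expr0 mul1r.
rewrite -mulrA; apply: pos_trans Hst _; rewrite mulrA; exact: IH'.
Qed.


Lemma del1 n (W : seq 'M[int]_n) (I : Type) (r : I -> 'M[int]_n) s :
  (forall A B, A \in W -> B \in W -> A *m B \in W) ->
  (forall A, A \in W -> A \in unitmx /\ invmx A \in W) ->
  (forall i, r i \in W) -> (forall i, r i *m r i = 1%:M) ->
  forall w G, G \in W -> s \in refl_seq_aux r G w ->
  exists w', (size w' + 1 = size w)%N /\ s *m (G *m rword r w) = G *m rword r w'.
Proof.
move=> Hmul Hinv HrW Hrr.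
elim => [|i w IH] G HG //=.
have [Gu GiW] := Hinv G HG.
change (rword r (i::w)) with (r i *m rword r w).
rewrite inE => /orP [/eqP Es | Hin].
  exists w; split; first by rewrite addn1.
  rewrite Es !mulmxA mulmxKV // -(mulmxA G) Hrr mulmx1 //.
have [w'' [Hsz E]] := IH (G *m r i) (Hmul _ _ HG (HrW i)) Hin.
exists (i :: w''); split; first by rewrite /= addSn Hsz.
change (rword r (i::w'')) with (r i *m rword r w'').
by rewrite (mulmxA G) E mulmxA.
Qed.

Lemma del2 n (W : seq 'M[int]_n) (I : Type) (r : I -> 'M[int]_n) s :
  (forall A B, A \in W -> B \in W -> A *m B \in W) ->
  (forall A, A \in W -> A \in unitmx /\ invmx A \in W) ->
  (forall i, r i \in W) -> (forall i, r i *m r i = 1%:M) ->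
  forall w G, G \in W -> (1 < count_mem s (refl_seq_aux r G w))%N ->
  exists w', (size w' + 2 = size w)%N /\ G *m rword r w' = G *m rword r w.
Proof.
move=> Hmul Hinv HrW Hrr.
elim => [|i w IH] G HG //=.
have [Gu GiW] := Hinv G HG.
have HG' := Hmul _ _ HG (HrW i).
change (rword r (i::w)) with (r i *m rword r w).
case: eqP => [Es|Ns] /= Hc.
  have Hin : s \in refl_seq_aux r (G *m r i) w.
    apply/negPn/negP => /count_memPn E; by rewrite E in Hc.
  have [w'' [Hsz E]] := del1 Hmul Hinv HrW Hrr HG' Hin.
  move: E; rewrite -Es !mulmxA mulmxKV // -(mulmxA G) Hrr mulmx1 => E.
  have E2 : rword r w = r i *m rword r w''.
    have := congr1 (mulmx (invmx G)) E.
    by rewrite !mulmxA mulVmx // !mul1mx => ->.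
  exists w''; split; first by rewrite -Hsz addn1 addn2.
  by rewrite E2 -mulmxA (mulmxA (r i)) Hrr mul1mx.
have [w'' [Hsz E]] := IH (G *m r i) HG' Hc.
exists (i :: w''); split; first by rewrite /= addSn Hsz.
change (rword r (i::w'')) with (r i *m rword r w'').
by rewrite !mulmxA E.
Qed.

Unset Implicit Arguments.

Theorem proposition4p9 (n : nat) (W : seq 'M[int]_n) (I : finType)
  (r : I -> 'M[int]_n) (w : seq I) (sigma : 'M[int]_n) :
  reflection_lattice_group W ->
  simple_reflections W r ->
  minimal_word r w ->
  sigma \in W -> is_reflection sigma ->
  (exists i, sigma = r i) ->
  is_reflection (rword r w) ->
  rword r w *m sigma = sigma *m rword r w ->
  rword r w <> sigma ->
  count_mem sigma (refl_seq r w) = 0%N.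
Proof.
move=> HW [rinj [v [Hgen Hsimp]]] Hmin HsW Hsr _ Htr Hcomm Hneq.
have [Hn0|Hn] : n = 0%N \/ (0 < n)%N by case: n {W r sigma HW rinj v Hgen Hsimp Hmin HsW Hsr Htr Hcomm Hneq} => [|n]; [left|right].
  subst n; exfalso; apply: Hneq; by rewrite [rword r w]flatmx0 [sigma]flatmx0.
case: HW => H1 Hmul Hinv _.
have Hr : forall i, [/\ r i \in W, is_reflection (r i) & wall W v (r i)].
  move=> i; have [Hi1 [Hi2 Hi3]] := (Hsimp (r i)).2 (ex_intro _ i erefl).
  by split.
have HrW : forall i, r i \in W by move=> i; have [] := Hr i.
have Hrr : forall i, r i *m r i = 1%:M.
  by move=> i; have [_ Hi _] := Hr i; exact: refl_invol.
have [a [b HS]] := refl_ab Hn Hsr.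
have [a' [b' HT]] := refl_ab Hn Htr.
have Hcomm' : ratmx (rword r w) *m ratmx sigma = ratmx sigma *m ratmx (rword r w).
  by rewrite -!ratmxM Hcomm.
have Hev := commute_ev HS HT Hcomm' (fun E => Hneq (ratmx_inj E)).
have Hi := ind Hn Hmul Hinv H1 HsW Hsr HS Hgen Hr w H1.
rewrite mul1mx ratmx1 mul1mx Hev in Hi.
have Hfv : ev b v != 0.
  by have := nofix Hmul Hinv HsW Hsr HS H1 Hgen; rewrite ratmx1 mul1mx.
have Hc1 : (count_mem sigma (refl_seq_aux r 1%:M w) <= 1)%N.
  rewrite leqNgt; apply/negP => Hc.
  have [w' [Hsz E]] := del2 Hmul Hinv HrW Hrr H1 Hc.
  apply: (Hmin w'); last by rewrite !mul1mx in E.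
  by rewrite -Hsz addn2.
rewrite /refl_seq; move: Hi Hc1.
case: (count_mem sigma (refl_seq_aux r 1%:M w)) => [|[|k]] //= Hi _.
exfalso; have := sq_pos Hfv; rewrite expr1 in Hi; nra.
Qed.
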